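(* Let $\lambda_n$ denote the largest eigenvalue of the real symmetric $n\times n$ matrix $\mathcal A_n$ defined below. There exists $n_0$ such that for all integers $n\ge n_0$, $$4-\frac{40}{n}<\lambda_n<4-\frac{2}{n}.$$
   Context: For an integer $n\ge 3$, $\mathcal A_n=(a_{jk})_{j,k=0}^{n-1}$ is the $n\times n$ real matrix with diagonal entries $a_{jj}=2\cos\frac{2\pi j}{n}$, with $a_{j,j+1}=a_{j+1,j}=1$ for $0\le j\le n-2$, with $a_{0,n-1}=a_{n-1,0}=1$, and all other entries $0$. (It is the matrix of $x+x^{-1}+y+y^{-1}$ in the representation $T_1$ of the finite Heisenberg group $H_n$.) *)

(* Defs.v *)
From HB Require Import structures.
From mathcomp Require Import all_boot all_order all_algebra.
From mathcomp Require Import reals trigo.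
Set Implicit Arguments. Unset Strict Implicit. Unset Printing Implicit Defensive.
Import Order.TTheory GRing.Theory Num.Theory.
Local Open Scope ring_scope.

Definition Amat (R : realType) (n : nat) : 'M[R]_n :=
  \matrix_(j < n, k < n)
    if j == k :> nat then 2 * cos (2 * pi * j%:R / n%:R)
    else if [|| (k == (j : nat).+1 :> nat), (j == (k : nat).+1 :> nat),
               ((j == 0 :> nat) && (k == n.-1 :> nat))
             | ((j == n.-1 :> nat) && (k == 0 :> nat))]
         then 1 else 0.

Definition largest_eigenvalue (R : realType) (n : nat) (A : 'M[R]_n) (lam : R) :=
  eigenvalue A lam /\ forall mu : R, eigenvalue A mu -> mu <= lam.

(* Main.v *)
Require Import Defs.
From HB Require Import structures.
From mathcomp Require Import all_boot all_order all_algebra.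
From mathcomp Require Import reals trigo.
From mathcomp Require Import boolp classical_sets interval_inference topology normedtype derive.
From mathcomp Require Import ring lra zify.
Import Order.TTheory GRing.Theory Num.Theory.
Import numFieldNormedType.Exports.
Local Open Scope ring_scope.

Section Gen.
Local Open Scope classical_set_scope.
Variable R : realType.
Variable n : nat.
Implicit Types (B : 'M[R]_n) (u v : 'rV[R]_n).

Definition bf B u v : R := (u *m B *m v^T) 0 0.

Lemma quad_disc (a b c : R) : 0 <= c ->
  (forall t, 0 <= a + 2 * t * b + t ^+ 2 * c) -> b ^+ 2 <= a * c.
Proof.
move=> c0 H; have := H 0; rewrite expr0n /= !(mul0r, mulr0, addr0) => a0.
case: (ltrP 0 c) => cpos.
  pose t := b / c; have hc : c * t = b by rewrite /t mulrC divfK // gt_eqF.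
  have := H (- t); rewrite -hc => h; nra.
have c00 : c = 0 by apply/le_anti; rewrite cpos c0.
subst c; case: (eqVneq b 0) => [->|bn0]; first by rewrite expr0n /= mulr0.
pose t := (- (a + 1) / (2 * b)); have ht : 2 * t * b = - (a + 1).
  by rewrite /t; field; rewrite bn0.
have := H t; rewrite mulr0 addr0 ht => h; lra.
Qed.

Lemma bfD B u1 u2 v : bf B (u1 + u2) v = bf B u1 v + bf B u2 v.
Proof. by rewrite /bf !mulmxDl mxE. Qed.
Lemma bfDr B u v1 v2 : bf B u (v1 + v2) = bf B u v1 + bf B u v2.
Proof. by rewrite /bf linearD /= mulmxDr mxE. Qed.
Lemma bfZ B t u v : bf B (t *: u) v = t * bf B u v.
Proof. by rewrite /bf -!scalemxAl mxE. Qed.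
Lemma bfZr B t u v : bf B u (t *: v) = t * bf B u v.
Proof. by rewrite /bf linearZ /= -scalemxAr mxE. Qed.
Lemma bf_sym B u v : B^T = B -> bf B v u = bf B u v.
Proof.
move=> sB; rewrite /bf.
have -> : (v *m B *m u^T) 0 0 = ((v *m B *m u^T)^T) 0 0 by rewrite [RHS](mxE trmx_key).
by rewrite !trmx_mul trmxK sB mulmxA.

Qed.

Lemma CS B u v : B^T = B -> (forall x, 0 <= bf B x x) ->
  bf B u v ^+ 2 <= bf B u u * bf B v v.
Proof.
move=> sB psd; apply: quad_disc; first exact: psd.
move=> t; have := psd (u + t *: v).
rewrite bfD !bfDr !bfZ !bfZr (bf_sym B u v sB) => h; lra.
Qed.


Lemma bf1E v : bf 1%:M v v = \sum_i v 0 i ^+ 2.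
Proof. by rewrite /bf mulmx1 mxE; apply: eq_bigr => i _; rewrite mxE. Qed.

Lemma bf1_ge0 v : 0 <= bf 1%:M v v.
Proof. by rewrite bf1E sumr_ge0 // => i _; rewrite sqr_ge0. Qed.

Lemma bf1_gt0 v : v != 0 -> 0 < bf 1%:M v v.
Proof.
move=> vn0; rewrite lt_def bf1_ge0 andbT; apply: contra vn0 => /eqP h.
apply/eqP/rowP => i; rewrite mxE.
have := @psumr_eq0P _ _ predT (fun i => v 0 i ^+ 2) (fun i _ => sqr_ge0 _).
rewrite -bf1E => /(_ h i isT)/eqP; rewrite sqrf_eq0 => /eqP ->; by [].
Qed.

Lemma bf_entry B v i : bf B v (delta_mx 0 i) = (v *m B) 0 i.
Proof. by rewrite /bf trmx_delta -colE mxE. Qed.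

Lemma bf_diag B i : bf B (delta_mx 0 i) (delta_mx 0 i) = B i i.
Proof. by rewrite bf_entry -rowE mxE. Qed.

Lemma bfBl (a : R) B v : bf (a%:M - B) v v = a * bf 1%:M v v - bf B v v.
Proof.
rewrite /bf mulmxBr mulmxBl mul_mx_scalar mulmx1 -scalemxAl.
set M := v *m v^T; set N := _ *m v^T; by rewrite !mxE.
Qed.


Lemma bf0 B v : bf B 0 v = 0.
Proof. by rewrite /bf !mul0mx mxE. Qed.

Lemma top_eig (A : 'M[R]_n) (c0 c1 : R) (w : 'rV[R]_n) :
  A^T = A -> w != 0 -> c0 * bf 1%:M w w <= bf A w w ->
  (forall v, bf A v v <= c1 * bf 1%:M v v) ->
  exists lam, (eigenvalue A lam /\ forall mu, eigenvalue A mu -> mu <= lam)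
     /\ c0 <= lam /\ lam <= c1.
Proof.
move=> sA wn0 hw hub.
pose E := [set x : R | exists2 v, v != 0 & x = bf A v v / bf 1%:M v v].
have E0 : E !=set0 by exists (bf A w w / bf 1%:M w w); exists w.
have ubE : ubound E c1.
  by move=> x [v vn0 ->]; rewrite ler_pdivrMr ?bf1_gt0.
have hasubE : has_ubound E by exists c1.
pose lam := sup E.
have lamub : forall v, v != 0 -> bf A v v <= lam * bf 1%:M v v.
  move=> v vn0; rewrite -ler_pdivrMr ?bf1_gt0 //.
  by apply: ub_le_sup => //; exists v.
exists lam.
have c0lam : c0 <= lam.
  have := lamub w wn0; have := bf1_gt0 w wn0; nra.
have lamc1 : lam <= c1 by apply: ge_sup.
split; last by split.
have sB : (lam%:M - A)^T = lam%:M - A by rewrite linearB /= tr_scalar_mx sA.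
have psd : forall x, 0 <= bf (lam%:M - A) x x.
  move=> x; rewrite bfBl subr_ge0; case: (eqVneq x 0) => [->|xn0]; last exact: lamub.
  by rewrite !bf0 mulr0.
have det0 : \det (lam%:M - A) = 0.
  apply/eqP/negPn/negP => hdet.
  have uB : lam%:M - A \in unitmx by rewrite unitmxE unitfE.
  have key : exists K, 0 < K /\ forall v, bf 1%:M v v <= K * bf (lam%:M - A) v v.
    set B := lam%:M - A in sB psd hdet uB *.
    pose C := invmx B.
    pose K' := \sum_k bf 1%:M (col k C)^T (col k C)^T.
    pose tr := \sum_i B i i.
    have K'0 : 0 <= K' by apply: sumr_ge0 => k _; exact: bf1_ge0.
    have tr0 : 0 <= tr by apply: sumr_ge0 => i _; rewrite -bf_diag psd.
    exists (K' * tr + 1); split; first by have := mulr_ge0 K'0 tr0; lra.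
    move=> v; set y := v *m B.
    have hy : bf 1%:M y y <= tr * bf B v v.
      rewrite bf1E /tr mulr_suml; apply: ler_sum => i _.
      by rewrite /y -bf_entry -bf_diag mulrC; exact: CS.
    have hv : v = y *m C by rewrite /y /C mulmxK.
    have hvk : forall k, v 0 k = bf 1%:M y (col k C)^T.
      by move=> k; rewrite /bf mulmx1 trmxK colE mulmxA -colE mxE -hv.
    have hN : bf 1%:M v v <= bf 1%:M y y * K'.
      rewrite [X in X <= _]bf1E /K' mulr_sumr; apply: ler_sum => k _.
      rewrite (hvk k); apply: CS; [exact: tr_scalar_mx | exact: bf1_ge0].
    have := psd v; have := bf1_ge0 y; nra.
  case: key => K [Kpos key].
  have ub2 : ubound E (lam - K^-1).
    move=> x [v vn0 ->].
    have Nv := bf1_gt0 v vn0; have := key v; rewrite bfBl => hk.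
    rewrite ler_pdivrMr //.
    have hK : K * K^-1 = 1 by rewrite mulfV // gt_eqF.
    have iK : 0 < K^-1 by rewrite invr_gt0.
    nra.
  have := ge_sup E0 ub2; rewrite -/lam; have : 0 < K^-1 by rewrite invr_gt0.
  lra.
have [v vn0 vB0] : exists2 v : 'rV_n, v != 0 & v *m (lam%:M - A) = 0.
  by apply/det0P/eqP.
split.
  apply/eigenvalueP; exists v => //; move: vB0.
  by rewrite mulmxBr mul_mx_scalar => /eqP; rewrite subr_eq0 => /eqP <-.
move=> mu /eigenvalueP [v' hv' v'n0].
have h : bf A v' v' = mu * bf 1%:M v' v'.
  by rewrite /bf hv' -scalemxAl mulmx1; set M := _ *m _^T; rewrite mxE.
apply: ub_le_sup => //; exists v' => //; rewrite h mulfK // gt_eqF // bf1_gt0 //.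
Qed.


Lemma bfE B v : bf B v v = \sum_i \sum_j v 0 i * B i j * v 0 j.
Proof.
rewrite /bf mxE exchange_big /=; apply: eq_bigr => j _.
by rewrite !mxE mulr_suml; apply: eq_bigr => i _.
Qed.

Lemma amgm2 (a b : R) {p q : R} : 0 < p -> 0 < q ->
  2 * (a * b) <= a ^+ 2 * (q / p) + b ^+ 2 * (p / q).
Proof.
move=> p0 q0; set r := q / p.
have r0 : 0 < r by rewrite divr_gt0.
have -> : p / q = r^-1 by rewrite /r invf_div.
have hr : r * r^-1 = 1 by rewrite mulfV // gt_eqF.
have ir0 : 0 < r^-1 by rewrite invr_gt0.
have : 0 <= (a * r - b) ^+ 2 * r^-1 by rewrite mulr_ge0 ?sqr_ge0 // ltW.
have -> : (a * r - b) ^+ 2 * r^-1 = a ^+ 2 * r - 2 * (a * b) + b ^+ 2 * r^-1.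
  by field; rewrite gt_eqF.
lra.
Qed.

Lemma upper_cw (A : 'M[R]_n) (g : 'I_n -> R) nu :
  A^T = A -> (forall i j, i != j -> 0 <= A i j) -> (forall i, 0 < g i) ->
  (forall i, \sum_j A i j * g j <= nu * g i) ->
  forall v, bf A v v <= nu * bf 1%:M v v.
Proof.
move=> sA Anneg gpos hg v.
have Asym : forall i j, A j i = A i j.
  by move=> i j; rewrite -[in RHS]sA mxE.
pose y i j := A i j * (v 0 i ^+ 2 * (g j / g i)).
have step : bf A v v <= (\sum_i \sum_j y i j + \sum_i \sum_j y j i) / 2.
  rewrite bfE -big_split /= mulr_suml; apply: ler_sum => i _.
  rewrite -big_split /= mulr_suml; apply: ler_sum => j _.
  rewrite /y (Asym i j).
  case: (eqVneq i j) => [<-|ij].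
    have := gpos i => gi; rewrite mulfV ?gt_eqF // ; lra.
  have := amgm2 (v 0 i) (v 0 j) (gpos i) (gpos j).
  have := Anneg i j ij; nra.
rewrite [X in _ + X]exchange_big /= in step.
apply: (le_trans step); rewrite bf1E mulr_sumr.
have -> : (\sum_i \sum_j y i j + \sum_i \sum_j y i j) / 2 = \sum_i \sum_j y i j.
  by field.
apply: ler_sum => i _; rewrite /y.
have -> : \sum_j A i j * (v 0 i ^+ 2 * (g j / g i)) =
          v 0 i ^+ 2 / g i * \sum_j A i j * g j.
  rewrite mulr_sumr; apply: eq_bigr => j _; field; rewrite gt_eqF //.
have := hg i; have := gpos i; have := sqr_ge0 (v 0 i) => h1 h2 h3.
have k : 0 <= v 0 i ^+ 2 / g i by rewrite divr_ge0 // ltW.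
apply: le_trans (ler_wpM2l k (hg i)) _.
by rewrite le_eqVlt; apply/orP; left; apply/eqP; field; rewrite gt_eqF.
Qed.

Lemma lower_cw (A : 'M[R]_n) (x : 'rV[R]_n) mu :
  (forall i, mu * x 0 i ^+ 2 <= x 0 i * \sum_j A i j * x 0 j) ->
  mu * bf 1%:M x x <= bf A x x.
Proof.
move=> h; rewrite bf1E bfE mulr_sumr; apply: ler_sum => i _.
apply: le_trans (h i) _; rewrite mulr_sumr le_eqVlt; apply/orP; left.
by apply/eqP; apply: eq_bigr => j _; rewrite mulrA.
Qed.

End Gen.




Section Trig.
Variable R : realType.

Lemma sin_mvt {y : R} : 0 <= y -> exists c, 0 <= c <= y /\ sin y = cos c * y.
Proof.
move=> y0.
have [c cin h] : exists2 c, c \in `[0, y] & sin y - sin 0 = cos c * (y - 0).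
  apply: MVT_segment => //.
  exact/continuous_subspaceT/continuous_sin.
exists c; split; first by move: cin; rewrite in_itv.
by move: h; rewrite sin0 !subr0.
Qed.


Lemma cos_sq_le1 (c : R) : cos c ^+ 2 <= 1.
Proof. have := cos_geN1 c; have := cos_le1 c; nra. Qed.

Lemma sin_sq_le (y : R) : sin y ^+ 2 <= y ^+ 2.
Proof.
wlog y0 : y / 0 <= y.
  move=> H; case: (lerP 0 y) => [/H //|yn].
  by rewrite -sqrrN -sinN -[in leRHS]sqrrN; apply: H; lra.
have [c [_ ->]] := sin_mvt y0; rewrite exprMn.
have := cos_sq_le1 c; have := sqr_ge0 y; nra.
Qed.

Lemma two_sub_cos (x : R) : 2 - 2 * cos x = 4 * sin (x / 2) ^+ 2.
Proof.
have -> : x = (x / 2) *+ 2 by rewrite -mulr_natr divfK // pnatr_eq0.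
rewrite cos_mulr2n cos2sin2 mulr2n -[(x / 2 + x / 2) / 2]/((x/2 + x/2)/2).
have -> : (x / 2 + x / 2) / 2 = x / 2 by field.
lra.
Qed.

Lemma cos_lb (x : R) : 2 - 2 * cos x <= x ^+ 2.
Proof.
rewrite two_sub_cos; have := sin_sq_le (x / 2).
have -> : (x / 2) ^+ 2 = x ^+ 2 / 4 by field.
lra.
Qed.

Lemma sin_lb {y : R} : 0 <= y -> y * (1 - y ^+ 2 / 2) <= sin y.
Proof.
move=> y0; have [c [/andP [c0 cy] ->]] := sin_mvt y0.
have := cos_lb c; have : c ^+ 2 <= y ^+ 2 by rewrite ler_sqr ?nnegrE.
nra.
Qed.

Lemma cos_ub (x : R) : 0 <= x <= 2 -> x ^+ 2 * (1 - x ^+ 2 / 8) ^+ 2 <= 2 - 2 * cos x.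
Proof.
move=> /andP [x0 x2]; rewrite two_sub_cos.
have y0 : 0 <= x / 2 by rewrite divr_ge0.
have := sin_lb y0.
have h1 : 0 <= x / 2 * (1 - (x / 2) ^+ 2 / 2) by rewrite mulr_ge0 //; nra.
move=> h2.
have : (x / 2 * (1 - (x / 2) ^+ 2 / 2)) ^+ 2 <= sin (x / 2) ^+ 2.
  by rewrite ler_sqr ?nnegrE // (le_trans h1 h2).
have -> : (x / 2 * (1 - (x / 2) ^+ 2 / 2)) ^+ 2 = x ^+ 2 * (1 - x ^+ 2 / 8) ^+ 2 / 4.
  by field.
lra.
Qed.

Lemma cos_le0 (x : R) : pi / 2 <= x <= pi + pi / 2 -> cos x <= 0.
Proof.
move=> /andP [h1 h2].
have -> : x = (x - pi / 2) + pi / 2 by rewrite subrK.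
rewrite cosDpihalf oppr_le0; apply: sin_ge0_pi; lra.
Qed.

Lemma pi_le4 : pi <= 4 :> R.
Proof. have := @pihalf_lt2 R; lra. Qed.

Lemma cos_refl (N J : R) : N != 0 -> cos (2 * pi * (N - J) / N) = cos (2 * pi * J / N).
Proof.
move=> N0; have -> : 2 * pi * (N - J) / N = - (2 * pi * J / N) + pi *+ 2.
  by rewrite mulr2n; field.
by rewrite cosD2pi cosN.
Qed.

End Trig.


Section Nm.
Variable R : realType.

Lemma phi_pos (N t : R) : 1000 <= N -> 0 <= t -> t <= 2 * N ->
  5 * N ^+ 2 * (54 * t - 12 * N - 18) + 11 * N * ((2 * N + 3 * t + 3) ^+ 2 - 36 * t)
  <= 72 * t * ((2 * N + 3 * t + 3) ^+ 2 - 36 * t).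
Proof.
move=> N1 t0 t2.
have h1 : 0 <= 153 * (t - (57 / 765) * N) ^+ 2 by rewrite mulr_ge0 // sqr_ge0.
have hN : 0 <= N by lra.
have h2 : 0 <= t * N by rewrite mulr_ge0.
have h3 : 0 <= t * t by rewrite mulr_ge0.
have h4 : 0 <= t * (t * N) by rewrite mulr_ge0.
have h5 : 0 <= (2 * N - t) * (N * N) by rewrite mulr_ge0 //; nra.
have h6 : 0 <= (2 * N - t) * (t * N) by rewrite mulr_ge0 //; nra.
nra.
Qed.

Lemma up_near_num (N t u c : R) : 1000 <= N -> 1 <= t -> 16 * t <= N ^+ 2 ->
  16 * t / N ^+ 2 <= u -> u <= 64 * t / N ^+ 2 ->
  u * (1 - u / 8) ^+ 2 <= 2 - 2 * c ->
  11 / (5 * N) + (54 * t - 12 * N - 18) / ((2 * N + 3 * t + 3) ^+ 2 - 36 * t) <= 2 - 2 * c.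
Proof.
move=> N1 t1 tN hu1 hu2 hc.
have N0 : 0 < N by lra.
have N20 : 0 < N ^+ 2 by rewrite exprn_gt0.
have Q9 : 9 * t ^+ 2 <= (2 * N + 3 * t + 3) ^+ 2 - 36 * t.
  have : 0 <= N * t by rewrite mulr_ge0 //; lra.
  nra.
have Q0 : 0 < (2 * N + 3 * t + 3) ^+ 2 - 36 * t.
  by apply: lt_le_trans Q9; rewrite mulr_gt0 // exprn_gt0 //; lra.
move: Q9 Q0; set Q := (2 * N + 3 * t + 3) ^+ 2 - 36 * t => Q9 Q0.
have u4 : u <= 4.
  apply: (le_trans hu2); rewrite ler_pdivrMr //; lra.
have u0 : 0 <= u by apply: le_trans hu1; rewrite divr_ge0 //; lra.
have e : 11 / (5 * N) + (54 * t - 12 * N - 18) / Q =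
         (5 * N ^+ 2 * (54 * t - 12 * N - 18) + 11 * N * Q) / (5 * N ^+ 2 * Q).
  by field; rewrite !gt_eqF.
rewrite e ler_pdivrMr; last by rewrite !mulr_gt0.
case: (lerP t (2 * N)) => ht.
- have u128 : u <= 128 / N.
    apply: (le_trans hu2); rewrite ler_pdivrMr //.
    have -> : 128 / N * N ^+ 2 = 128 * N by field; rewrite gt_eqF.
    lra.
  have uN : u * N <= 128 by rewrite -ler_pdivlMr.
  have h9 : 9 / 10 * u <= 2 - 2 * c.
    apply: le_trans hc; nra.
  have h9' : 72 * t / (5 * N ^+ 2) <= 2 - 2 * c.
    apply: le_trans h9; move: hu1; rewrite ler_pdivrMr // => hu1'.
    rewrite ler_pdivrMr; last by rewrite mulr_gt0.
    nra.
  have := @phi_pos N t N1 (ltW (lt_le_trans ltr01 t1)) ht.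
  move=> hp; apply: (le_trans hp).
  have -> : 72 * t * Q = 72 * t / (5 * N ^+ 2) * (5 * N ^+ 2 * Q) by field; rewrite gt_eqF.
  by rewrite ler_pM2r ?mulr_gt0.
- have hh : 1 / 4 <= (1 - u / 8) ^+ 2.
    have : 1 / 2 <= 1 - u / 8 by lra.
    nra.
  have h8 : u / 4 <= 2 - 2 * c.
    apply: le_trans hc; have := ler_wpM2l u0 hh; lra.
  have hu' : 16 * t <= u * N ^+ 2 by rewrite -ler_pdivrMr.
  have u32 : 32 <= u * N ^+ 2 / N.
    rewrite ler_pdivlMr //; nra.
  have e2 : u * N ^+ 2 / N = u * N by field; rewrite gt_eqF.
  rewrite e2 in u32.
  have w : 8 <= (2 - 2 * c) * N by nra.
  have A1 : 40 * N * Q <= (2 - 2 * c) * (5 * N ^+ 2 * Q).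
    have -> : (2 - 2 * c) * (5 * N ^+ 2 * Q) = ((2 - 2 * c) * N) * (5 * N * Q) by ring.
    have : 0 < 5 * N * Q by rewrite !mulr_gt0.
    nra.
  apply: le_trans A1.
  have : 5 * N * (54 * t - 12 * N - 18) <= 29 * Q.
    have : 0 <= t * (t - 2 * N) by rewrite mulr_ge0 //; lra.
    nra.
  nra.
Qed.

Lemma up_near (N D c P : R) : 1000 <= N -> 1 <= D -> 4 * D <= N -> 2 <= P -> P <= 4 ->
  (2 * P * D / N) ^+ 2 * (1 - (2 * P * D / N) ^+ 2 / 8) ^+ 2 <= 2 - 2 * c ->
  2 * c * (2 * N + 3 * D ^+ 2)^-1 + (2 * N + 3 * (D + 1) ^+ 2)^-1
   + (2 * N + 3 * (D - 1) ^+ 2)^-1 <= (4 - 11 / (5 * N)) * (2 * N + 3 * D ^+ 2)^-1.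
Proof.
move=> N1 D1 DN P2 P4 hc.
have N0 : 0 < N by lra.
have N20 : 0 < N ^+ 2 by rewrite exprn_gt0.
have t1 : 1 <= D ^+ 2 by nra.
have tN : 16 * D ^+ 2 <= N ^+ 2 by nra.
have hu : (2 * P * D / N) ^+ 2 = 4 * P ^+ 2 * D ^+ 2 / N ^+ 2 by field; rewrite gt_eqF.
have hu1 : 16 * D ^+ 2 / N ^+ 2 <= (2 * P * D / N) ^+ 2.
  rewrite hu ler_pM2r ?invr_gt0 //; have : 4 <= P ^+ 2 by nra.
  have := sqr_ge0 D; nra.
have hu2 : (2 * P * D / N) ^+ 2 <= 64 * D ^+ 2 / N ^+ 2.
  rewrite hu ler_pM2r ?invr_gt0 //; have : P ^+ 2 <= 16 by nra.
  have := sqr_ge0 D; nra.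
have := @up_near_num N (D ^+ 2) _ c N1 t1 tN hu1 hu2 hc.
set X := (54 * D ^+ 2 - 12 * N - 18).
set Q := (2 * N + 3 * D ^+ 2 + 3) ^+ 2 - 36 * D ^+ 2.
move=> key.
have G0 : 0 < 2 * N + 3 * D ^+ 2 by have := sqr_ge0 D; lra.
have Gp : 0 < 2 * N + 3 * (D + 1) ^+ 2 by have := sqr_ge0 (D + 1); lra.
have Gm : 0 < 2 * N + 3 * (D - 1) ^+ 2 by have := sqr_ge0 (D - 1); lra.
have eQ : Q = (2 * N + 3 * (D + 1) ^+ 2) * (2 * N + 3 * (D - 1) ^+ 2) by rewrite /Q; ring.
have Q0 : Q != 0 by rewrite eQ mulf_neq0 // gt_eqF.
rewrite -subr_ge0.
have -> : (4 - 11 / (5 * N)) * (2 * N + 3 * D ^+ 2)^-1 -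
   (2 * c * (2 * N + 3 * D ^+ 2)^-1 + (2 * N + 3 * (D + 1) ^+ 2)^-1
   + (2 * N + 3 * (D - 1) ^+ 2)^-1)
   = (2 * N + 3 * D ^+ 2)^-1 * ((2 - 2 * c) - (11 / (5 * N) + X / Q)).
  rewrite eQ /X; field.
  by rewrite !gt_eqF.
by rewrite mulr_ge0 // ?subr_ge0 // ltW // invr_gt0.
Qed.

End Nm.


Section Nm2.
Variable R : realType.

Lemma up_zero (N : R) : 1000 <= N ->
  2 * 1 * (2 * N + 3 * 0 ^+ 2)^-1 + (2 * N + 3 * 1 ^+ 2)^-1 + (2 * N + 3 * 1 ^+ 2)^-1
  <= (4 - 11 / (5 * N)) * (2 * N + 3 * 0 ^+ 2)^-1.
Proof.
move=> N1; have N0 : 0 < N by lra.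
rewrite -subr_ge0.
have -> : (4 - 11 / (5 * N)) * (2 * N + 3 * 0 ^+ 2)^-1 -
  (2 * 1 * (2 * N + 3 * 0 ^+ 2)^-1 + (2 * N + 3 * 1 ^+ 2)^-1 + (2 * N + 3 * 1 ^+ 2)^-1)
  = (8 * N - 33) / (10 * N ^+ 2 * (2 * N + 3)).
  rewrite expr0n /= expr1n; field.
  by rewrite !gt_eqF //; lra.
rewrite divr_ge0 //; first lra.
by rewrite !mulr_ge0 //; lra.
Qed.

Lemma up_far_num (N D : R) : 1000 <= N -> 6 <= D ->
  2 * (2 * N + 3 * (D - 1) ^+ 2)^-1 <= (4 - 11 / (5 * N)) * (2 * N + 3 * D ^+ 2)^-1.
Proof.
move=> N1 D6.
have N0 : 0 < N by lra.
have g1 : 0 < 2 * N + 3 * (D - 1) ^+ 2 by have := sqr_ge0 (D - 1); lra.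
have g2 : 0 < 2 * N + 3 * D ^+ 2 by have := sqr_ge0 D; lra.
have h : 3 <= 4 - 11 / (5 * N).
  have : 11 / (5 * N) <= 1 by rewrite ler_pdivrMr ?mulr_gt0 //; lra.
  lra.
have h2 : 2 * (2 * N + 3 * D ^+ 2) <= 3 * (2 * N + 3 * (D - 1) ^+ 2) by nra.
rewrite -subr_ge0.
have -> : (4 - 11 / (5 * N)) * (2 * N + 3 * D ^+ 2)^-1 - 2 * (2 * N + 3 * (D - 1) ^+ 2)^-1
  = ((4 - 11 / (5 * N)) * (2 * N + 3 * (D - 1) ^+ 2) - 2 * (2 * N + 3 * D ^+ 2))
     / ((2 * N + 3 * D ^+ 2) * (2 * N + 3 * (D - 1) ^+ 2)).
  by field; rewrite !gt_eqF.
rewrite divr_ge0 //; last by rewrite mulr_ge0 // ltW.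
nra.
Qed.


Lemma lo_zero (N S : R) : 1000 <= N -> N / 8 <= S ->
  (4 - 39 / N) * ((S - 0 ^+ 2) ^+ 2) ^+ 2 <=
  (S - 0 ^+ 2) ^+ 2 * (2 * 1 * (S - 0 ^+ 2) ^+ 2 + (S - 1 ^+ 2) ^+ 2 + (S - 1 ^+ 2) ^+ 2).
Proof.
move=> N1 S8; have N0 : 0 < N by lra.
rewrite expr0n /= subr0 expr1n.
have x0 : 0 <= S ^+ 2 by apply: sqr_ge0.
have k : 0 <= 39 * S ^+ 2 / N - 4 * S + 2.
  have : 4 * S <= 39 * S ^+ 2 / N by rewrite ler_pdivlMr //; nra.
  lra.
have := mulr_ge0 x0 k.
have e : S ^+ 2 * (2 * 1 * S ^+ 2 + (S - 1) ^+ 2 + (S - 1) ^+ 2) - (4 - 39 / N) * (S ^+ 2) ^+ 2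
  = S ^+ 2 * (39 * S ^+ 2 / N - 4 * S + 2) by field; rewrite gt_eqF.
rewrite -e subr_ge0 //.
Qed.


Lemma lo_mid (N S D c : R) : 1000 <= N -> N / 8 <= S -> S <= N / 4 -> 1 <= D ->
  D ^+ 2 <= S -> 2 - 2 * c <= 64 * D ^+ 2 / N ^+ 2 ->
  (4 - 39 / N) * ((S - D ^+ 2) ^+ 2) ^+ 2 <=
  (S - D ^+ 2) ^+ 2 * (2 * c * (S - D ^+ 2) ^+ 2 + (S - (D + 1) ^+ 2) ^+ 2
                       + (S - (D - 1) ^+ 2) ^+ 2).
Proof.
move=> N1 S8 S4 D1 DS hc; have N0 : 0 < N by lra.
have N20 : 0 < N ^+ 2 by rewrite exprn_gt0.
set t := D ^+ 2 in DS hc *; set z := S - t.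
have z0 : 0 <= z by rewrite /z; lra.
have t0 : 0 <= t by apply: sqr_ge0.
have zN : z <= N / 4 by rewrite /z; lra.
have e1 : (S - (D + 1) ^+ 2) ^+ 2 + (S - (D - 1) ^+ 2) ^+ 2 = 2 * z ^+ 2 - 4 * S + 12 * t + 2.
  by rewrite /z /t; ring.
have hA : - (4 * t) <= (2 * c - 2) * z ^+ 2.
  have h1 : - (64 * t / N ^+ 2) <= 2 * c - 2 by lra.
  have h2 : 64 * t / N ^+ 2 * z ^+ 2 <= 4 * t.
    rewrite mulrAC ler_pdivrMr //.
    have : z ^+ 2 <= N ^+ 2 / 16 by nra.
    move=> hz; have := ler_wpM2l (mulr_ge0 (ler0n _ 64) t0) hz.
    have -> : 64 * t * (N ^+ 2 / 16) = 4 * t * N ^+ 2 by field.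
    by [].
  have := ler_wpM2r (sqr_ge0 z) h1; rewrite mulNr; lra.
have hB : 0 <= 39 / N * z ^+ 2 - 8 * z + 16 * N / 39.
  have -> : 39 / N * z ^+ 2 - 8 * z + 16 * N / 39 = 39 / N * (z - 4 * N / 39) ^+ 2.
    by field; rewrite gt_eqF.
  by rewrite mulr_ge0 ?sqr_ge0 // divr_ge0 // ltW.
have key : (4 - 39 / N) * z ^+ 2 <= 2 * c * z ^+ 2 + (2 * z ^+ 2 - 4 * S + 12 * t + 2).
  have : t = S - z by rewrite /z; ring.
  lra.
have key' : (4 - 39 / N) * z ^+ 2 <=
    2 * c * z ^+ 2 + (S - (D + 1) ^+ 2) ^+ 2 + (S - (D - 1) ^+ 2) ^+ 2 by lra.
have h := ler_wpM2l (sqr_ge0 z) key'.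
have -> : (4 - 39 / N) * (z ^+ 2) ^+ 2 = z ^+ 2 * ((4 - 39 / N) * z ^+ 2) by ring.
exact h.
Qed.

End Nm2.



Definition Sn (n j : nat) := if j.+1 == n then 0%N else j.+1.
Definition Pn (n j : nat) := if j == 0%N then n.-1 else j.-1.
Definition dd (n j : nat) := minn j (n - j).


Lemma nb1 n j : (3 <= n)%N -> (j < n)%N -> dd n j = 0%N ->
  dd n (Sn n j) = 1%N /\ dd n (Pn n j) = 1%N.
Proof. rewrite /dd /Sn /Pn; case: ifP; case: ifP; lia. Qed.

Lemma nb2 n j : (3 <= n)%N -> (j < n)%N -> (1 <= dd n j)%N -> (2 * dd n j + 2 <= n)%N ->
  (dd n (Sn n j) = (dd n j).+1 /\ dd n (Pn n j) = (dd n j).-1) \/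
  (dd n (Sn n j) = (dd n j).-1 /\ dd n (Pn n j) = (dd n j).+1).
Proof. rewrite /dd /Sn /Pn; case: ifP; case: ifP; lia. Qed.

Lemma nb3 n j : (3 <= n)%N -> (j < n)%N ->
  ((dd n j).-1 <= dd n (Sn n j))%N /\ ((dd n j).-1 <= dd n (Pn n j))%N.
Proof. rewrite /dd /Sn /Pn; case: ifP; case: ifP; lia. Qed.

Lemma dd_half n j : (j < n)%N -> (2 * dd n j <= n)%N.
Proof. rewrite /dd; lia. Qed.

Section Conc.
Variable R : realType.

Lemma Amat_sym n : (Amat R n)^T = Amat R n.
Proof.
apply/matrixP => i j; rewrite !mxE eq_sym.
case: eqP => [->//|ij].
congr (if _ then _ else _); lia.
Qed.

Lemma Amat_nneg n (i j : 'I_n) : i != j -> 0 <= Amat R n i j.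
Proof.
move=> ij; rewrite mxE; case: ifP => [/eqP h|_].
  by move: ij; rewrite -val_eqE /= h eqxx.
by case: ifP => _ //; exact: ler01.
Qed.


Lemma sum_pick n m (G : nat -> R) : (m < n)%N ->
  \sum_(k < n) (if k == m :> nat then G k else 0) = G m.
Proof. by move=> mn; rewrite -big_mkcond big_ord1_eq mn. Qed.

Lemma Arow n (j : 'I_n) (F : nat -> R) : (3 <= n)%N ->
  \sum_(k < n) Amat R n j k * F k =
  2 * cos (2 * pi * j%:R / n%:R) * F j + F (Sn n j) + F (Pn n j).
Proof.
move=> n3; have jn := ltn_ord j.
have h : forall k : 'I_n, Amat R n j k * F k =
   ((if k == j :> nat then 2 * cos (2 * pi * j%:R / n%:R) * F k else 0)
   + (if k == Sn n j :> nat then F k else 0)) + (if k == Pn n j :> nat then F k else 0).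
  move=> k; have kn := ltn_ord k; rewrite mxE.
  case: (eqVneq (j : nat) k) => [jk|jk].
    rewrite -jk.
    have -> : (j == Sn n j :> nat) = false by rewrite /Sn; case: ifP; lia.
    have -> : (j == Pn n j :> nat) = false by rewrite /Pn; case: ifP; lia.
    by rewrite !addr0.
  rewrite add0r.
  case: ifP => hc; case: ifP => hS; case: ifP => hP;
    first [ by rewrite ?mul1r ?mul0r ?add0r ?addr0
          | exfalso; move: hc hS hP; rewrite /Sn /Pn; case: ifP; case: ifP; lia ].
rewrite (eq_bigr _ (fun k _ => h k)) !big_split /=.
rewrite (@sum_pick n j (fun k => 2 * cos (2 * pi * j%:R / n%:R) * F k)) //.
rewrite (@sum_pick n (Sn n j) F); last by rewrite /Sn; case: ifP; lia.
by rewrite (@sum_pick n (Pn n j) F) //; rewrite /Pn; case: ifP; lia.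
Qed.


Lemma cos_dd n j : (0 < n)%N -> (j <= n)%N ->
  cos (2 * pi * j%:R / n%:R) = cos (2 * pi * (dd n j)%:R / n%:R) :> R.
Proof.
move=> n0 jn; rewrite /dd; case: (leqP j (n - j)) => h //.
rewrite natrB // cos_refl //.
by rewrite pnatr_eq0 -lt0n.
Qed.


Definition gF n (m : nat) : R := (2 * n%:R + 3 * (dd n m)%:R ^+ 2)^-1.

Lemma gmono (N a b : R) : 0 < N -> 0 <= a -> a <= b ->
  (2 * N + 3 * b ^+ 2)^-1 <= (2 * N + 3 * a ^+ 2)^-1.
Proof.
move=> N0 a0 ab.
have h1 : 0 < 2 * N + 3 * a ^+ 2 by have := sqr_ge0 a; lra.
have h2 : 0 < 2 * N + 3 * b ^+ 2 by have := sqr_ge0 b; lra.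
rewrite lef_pV2 ?posrE //; nra.
Qed.

Lemma natr_pred (d : nat) : (1 <= d)%N -> (d.-1)%:R = d%:R - 1 :> R.
Proof. by move=> d1; rewrite -subn1 natrB. Qed.

Lemma up_cond n (j : 'I_n) : (1000 <= n)%N ->
  \sum_(k < n) Amat R n j k * gF n k <= (4 - 11 / (5 * n%:R)) * gF n j.
Proof.
move=> n1000; have n3 : (3 <= n)%N by lia.
have n0 : (0 < n)%N by lia.
have jn := ltn_ord j.
have N1 : 1000 <= n%:R :> R by rewrite ler_nat.
have N0 : 0 < n%:R :> R by lra.
rewrite Arow // cos_dd //; last exact: ltnW.
rewrite /gF.
have hd2 := @dd_half n j jn.
set d := dd n j in hd2 *.
case: (posnP d) => [d0|dpos].
  have [-> ->] := nb1 n j n3 jn d0.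
  rewrite d0 mulr0 mul0r cos0.
  by have := @up_zero R _ N1.
case: (leqP (4 * d) n) => h4.
  have hnb := nb2 n j n3 jn dpos ltac:(lia).
  have D1 : 1 <= d%:R :> R by rewrite ler1n.
  have DN : 4 * d%:R <= n%:R :> R by rewrite -natrM ler_nat.
  have th0 : 0 <= 2 * pi * d%:R / n%:R :> R.
    by rewrite divr_ge0 // mulr_ge0 // mulr_ge0 // pi_ge0.
  have th2 : 2 * pi * d%:R / n%:R <= 2 :> R.
    rewrite ler_pdivrMr //; have := @pi_le4 R; have := @pihalf_lt2 R; nra.
  have := @cos_ub R (2 * pi * d%:R / n%:R); rewrite th0 th2 /= => /(_ isT) hc.
  have hup := @up_near R _ _ _ _ N1 D1 DN (@pi_ge2 R) (@pi_le4 R) hc.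
  have eS : (d.+1)%:R = d%:R + 1 :> R by rewrite -addn1 natrD.
  have eP : (d.-1)%:R = d%:R - 1 :> R by rewrite natr_pred.
  case: hnb => [[-> ->]|[-> ->]]; rewrite eS eP //.
  by rewrite -addrA [X in _ + X]addrC addrA.
have D6 : 6 <= d%:R :> R.
  by rewrite ler_nat; lia.
have hc0 : cos (2 * pi * d%:R / n%:R) <= 0 :> R.
  have pi0 := @pi_gt0 R.
  have hd4 : n%:R + 1 <= 4 * d%:R :> R.
    by rewrite -natrM natr1 ler_nat; lia.
  have hd2' : 2 * d%:R <= n%:R :> R.
    by rewrite -natrM ler_nat.
  have hh := @cos_le0 R (2 * pi * d%:R / n%:R). apply: hh; apply/andP; split.
    rewrite ler_pdivlMr //; nra.
  rewrite ler_pdivrMr //; nra.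
have [hS hP] := nb3 n j n3 jn.
have eP : (d.-1)%:R = d%:R - 1 :> R by rewrite natr_pred.
have gS : (2 * n%:R + 3 * (dd n (Sn n j))%:R ^+ 2)^-1 <= (2 * n%:R + 3 * (d%:R - 1) ^+ 2)^-1 :> R.
  by rewrite -eP; apply: gmono; rewrite ?ler0n ?ler_nat.
have gP : (2 * n%:R + 3 * (dd n (Pn n j))%:R ^+ 2)^-1 <= (2 * n%:R + 3 * (d%:R - 1) ^+ 2)^-1 :> R.
  by rewrite -eP; apply: gmono; rewrite ?ler0n ?ler_nat.
have key := @up_far_num R _ _ N1 D6.
have g0 : 0 < (2 * n%:R + 3 * d%:R ^+ 2)^-1 :> R.
  by rewrite invr_gt0; have := sqr_ge0 (d%:R : R); lra.
have hneg : 2 * cos (2 * pi * d%:R / n%:R) * (2 * n%:R + 3 * d%:R ^+ 2)^-1 <= 0 :> R.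
  by rewrite -mulrA mulr_ge0_le0 // mulr_le0_ge0 // ltW.
lra.
Qed.



Definition fF n L (m : nat) : R :=
  if (dd n m <= L)%N then (L%:R ^+ 2 - (dd n m)%:R ^+ 2) ^+ 2 else 0.

Lemma lo_cond n L (j : 'I_n) : (1000 <= n)%N -> (4 * L ^ 2 <= n)%N -> (n < 4 * L.+1 ^ 2)%N ->
  (4 - 39 / n%:R) * fF n L j ^+ 2 <= fF n L j * \sum_(k < n) Amat R n j k * fF n L k.
Proof.
move=> n1000 hL1 hL2; have n3 : (3 <= n)%N by lia.
have n0 : (0 < n)%N by lia.
have jn := ltn_ord j.
have L3 : (3 <= L)%N by nia.
have N1 : 1000 <= n%:R :> R by rewrite ler_nat.
have N0 : 0 < n%:R :> R by lra.
have S8 : n%:R / 8 <= L%:R ^+ 2 :> R.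
  rewrite ler_pdivrMr // -natrX -natrM ler_nat; nia.
have S4 : L%:R ^+ 2 <= n%:R / 4 :> R.
  rewrite ler_pdivlMr // -natrX -natrM ler_nat; nia.
rewrite Arow // cos_dd //; last exact: ltnW.
rewrite /fF.
set d := dd n j.
case: (leqP L d) => hLd.
  have -> : (if (d <= L)%N then (L%:R ^+ 2 - d%:R ^+ 2) ^+ 2 else 0) = 0 :> R.
    case: ifP => // h; have -> : d = L by apply/eqP; rewrite eqn_leq h hLd.
    by rewrite subrr expr0n.
  by rewrite expr0n /= !mulr0 mul0r.
rewrite (ltnW hLd).
case: (posnP d) => [d0|dpos].
  have [-> ->] := nb1 n j n3 jn d0.
  have L1 : (1 <= L)%N by lia.
  rewrite L1 d0 mulr0 mul0r cos0.
  by have := @lo_zero R _ _ N1 S8.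
have hnb := nb2 n j n3 jn dpos ltac:(nia).
have D1 : 1 <= d%:R :> R by rewrite ler1n.
have DS : d%:R ^+ 2 <= L%:R ^+ 2 :> R by rewrite -!natrX ler_nat; nia.
have hc : 2 - 2 * cos (2 * pi * d%:R / n%:R) <= 64 * d%:R ^+ 2 / n%:R ^+ 2 :> R.
  apply: le_trans (@cos_lb R _) _.
  have -> : (2 * pi * d%:R / n%:R) ^+ 2 = 4 * pi ^+ 2 * d%:R ^+ 2 / n%:R ^+ 2 :> R.
    by field; rewrite gt_eqF.
  rewrite ler_pM2r ?invr_gt0 ?exprn_gt0 //.
  have p16 : pi ^+ 2 <= 16 :> R.
    have := @pi_le4 R; have := @pi_gt0 R; nra.
  have : 0 <= (16 - pi ^+ 2) * d%:R ^+ 2 :> R.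
    by rewrite mulr_ge0 ?sqr_ge0 // subr_ge0.
  lra.
have hlo := @lo_mid R _ _ _ _ N1 S8 S4 D1 DS hc.
have eS : (d.+1)%:R = d%:R + 1 :> R by rewrite -addn1 natrD.
have eP : (d.-1)%:R = d%:R - 1 :> R by rewrite natr_pred.
have hS1 : (d.+1 <= L)%N by [].
have hP1 : (d.-1 <= L)%N by lia.
case: hnb => [[-> ->]|[-> ->]]; rewrite hS1 hP1 eS eP //.
move: hlo; lra.
Qed.

End Conc.


Lemma exL n : exists L, (4 * L ^ 2 <= n)%N /\ (n < 4 * L.+1 ^ 2)%N.
Proof.
elim: n => [|n [L [h1 h2]]]; first by exists 0%N.
case: (ltnP n.+1 (4 * L.+1 ^ 2)) => h3; first by exists L; split => //; lia.
exists L.+1; split => //; nia.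
Qed.

Theorem lemma2p2 (R : realType) :
  exists n0 : nat, forall n : nat, (3 <= n)%N -> (n0 <= n)%N ->
    exists lam : R, largest_eigenvalue (Amat R n) lam /\
      4 - 40 / n%:R < lam /\ lam < 4 - 2 / n%:R.
Proof.
exists 1000%N => n n3 n1000.
have n0 : (0 < n)%N by lia.
have N1 : 1000 <= n%:R :> R by rewrite ler_nat.
have N0 : 0 < n%:R :> R by lra.
have [L [hL1 hL2]] := exL n.
pose x := \row_(k < n) fF R n L k.
have xn0 : x != 0.
  apply/negP => /eqP /rowP /(_ (Ordinal n0)); rewrite !mxE /fF.
  have -> : dd n 0 = 0%N by rewrite /dd; lia.
  rewrite leq0n expr0n /= subr0 => /eqP; rewrite !expf_eq0 /= pnatr_eq0; lia.
have lo : (4 - 39 / n%:R) * @bf R n 1%:M x x <= @bf R n (Amat R n) x x.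
  have ex : forall k, x 0 k = fF R n L k by move=> k; rewrite mxE.
  apply: lower_cw => i; rewrite ex.
  under eq_bigr => k _ do rewrite ex.
  by apply: (@lo_cond R n L i).
have up : forall v, @bf R n (Amat R n) v v <= (4 - 11 / (5 * n%:R)) * @bf R n 1%:M v v.
  apply: (@upper_cw R n (Amat R n) (fun k : 'I_n => gF R n k)).
  - exact: Amat_sym.
  - exact: Amat_nneg.
  - move=> i; rewrite /gF invr_gt0; have := sqr_ge0 ((dd n i)%:R : R); lra.
  - by move=> i; apply: (@up_cond R n i).
have [lam [[he hmax] [h0 h1]]] := @top_eig R n _ _ _ _ (Amat_sym R n) xn0 lo up.
exists lam; split; first by split.
have a : 39 / n%:R < 40 / n%:R :> R by rewrite ltr_pM2r ?invr_gt0 //; lra.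
have b : 2 / n%:R < 11 / (5 * n%:R) :> R.
  rewrite ltr_pdivrMr // mulrAC ltr_pdivlMr ?mulr_gt0 //; lra.
lra.
Qed.
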